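(* Let $V$ be a vector space of uncountable dimension over a field $\mathbb{F}$, and let $u$ be an endomorphism of $V$ with no dominant eigenvalue. Then $V^u$ has a good stratification.
   Context: A scalar $\lambda$ is a dominant eigenvalue of $u$ if $\operatorname{rk}(u-\lambda\,\mathrm{id}_V)<\dim V$. $V^u$ is the $\mathbb{F}[t]$-module with underlying space $V$ and $t\cdot x:=u(x)$. A stratification of a non-zero $\mathbb{F}[t]$-module $M$ is an increasing family $(M_\alpha)_{\alpha\in D}$ of submodules indexed by a well-ordered set $D$ such that each quotient $M_\alpha/\sum_{\beta<\alpha}M_\beta$ is non-zero and monogenous (cyclic), and $M=\sum_{\alpha\in D}M_\alpha$; its dimension sequence is $n_\alpha:=\dim_{\mathbb{F}}(M_\alpha/\sum_{\beta<\alpha}M_\beta)\in\mathbb{N}^*\cup\{+\infty\}$. It is good if (a) $n_\alpha\ge 2$ whenever $\alpha$ is the minimum of $D$ or the successor of some element of $D$, and (b) $D$ has no maximum. *)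

(* Defs.v *)
From HB Require Import structures.
From mathcomp Require Import all_boot all_order all_algebra.
From mathcomp Require Import boolp classical_sets cardinality.
Set Implicit Arguments. Unset Strict Implicit. Unset Printing Implicit Defensive.
Import Order.TTheory GRing.Theory.
Local Open Scope classical_set_scope.
Local Open Scope ring_scope.

Section LinAlg.
Variables (F : fieldType) (V : lmodType F).

Definition lin_indep (B : set V) : Prop :=
  forall (s : seq V) (c : V -> F), uniq s -> (forall v, v \in s -> B v) ->
    \sum_(v <- s) c v *: v = 0 -> forall v, v \in s -> c v = 0.

Definition span (B : set V) : set V :=
  [set x | exists (s : seq V) (c : V -> F),
     (forall v, v \in s -> B v) /\ x = \sum_(v <- s) c v *: v].

Definition basis_of (S B : set V) : Prop :=
  B `<=` S /\ lin_indep B /\ span B = S.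

Definition dim_lt (S T : set V) : Prop :=
  exists BS BT, basis_of S BS /\ basis_of T BT /\
     (BS #<= BT)%card /\ ~ (BT #<= BS)%card.

Definition uncountable_dim : Prop :=
  exists B, basis_of setT B /\ ~ countable B.

Definition dominant_eigenvalue (u : V -> V) (l : F) : Prop :=
  dim_lt (range (fun x => u x - l *: x)) setT.

(* action of a polynomial p on x in the F[t]-module V^u *)
Definition peval (u : V -> V) (p : {poly F}) (x : V) : V :=
  \sum_(i < size p) p`_i *: iter i u x.

Definition submodule (u : V -> V) (M : set V) : Prop :=
  M 0 /\ (forall x y, M x -> M y -> M (x + y)) /\
  (forall (a : F) x, M x -> M (a *: x)) /\ (forall x, M x -> M (u x)).

Section Strat.
Variables (d : Order.disp_t) (D : orderType d).

(* D is well-ordered (totality comes from orderType) *)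
Definition well_ordered : Prop :=
  forall A : set D, A !=set0 -> exists a, A a /\ forall b, A b -> (a <= b)%O.

Definition sumfam (M : D -> set V) (P : D -> Prop) : set V :=
  [set x | exists (s : seq D) (f : D -> V),
     (forall b, b \in s -> P b /\ M b (f b)) /\ x = \sum_(b <- s) f b].

Definition below (M : D -> set V) (a : D) : set V :=
  sumfam M (fun b => (b < a)%O).

Definition stratification (u : V -> V) (M : D -> set V) : Prop :=
  [/\ (forall a, submodule u (M a)),
      (forall a b, (a <= b)%O -> M a `<=` M b),
      (* quotient M a / below M a is non-zero *)
      (forall a, exists x, M a x /\ ~ below M a x),
      (* quotient M a / below M a is monogenous (cyclic F[t]-module) *)
      (forall a, exists x, M a x /\ forall y, M a y ->
          exists (p : {poly F}) n, below M a n /\ y = n + peval u p x)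
    & sumfam M (fun _ => True) = setT].

(* dim_F (M a / below M a) >= 2 *)
Definition qdim_ge2 (M : D -> set V) (a : D) : Prop :=
  exists x y, M a x /\ M a y /\
    forall c1 c2 : F, below M a (c1 *: x + c2 *: y) -> c1 = 0 /\ c2 = 0.

Definition is_min (a : D) : Prop := forall b, (a <= b)%O.
Definition is_succ (a : D) : Prop :=
  exists b, (b < a)%O /\ ~ exists c, (b < c)%O /\ (c < a)%O.

Definition good (M : D -> set V) : Prop :=
  (forall a, is_min a \/ is_succ a -> qdim_ge2 M a) /\
  (forall a : D, exists b, (a < b)%O).

End Strat.

Definition has_good_stratification (u : V -> V) : Prop :=
  exists (d : Order.disp_t) (D : orderType d) (M : D -> set V),
    well_ordered D /\ stratification u M /\ good M.

End LinAlg.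

(* Main.v *)
Require Import Defs.
From HB Require Import structures.
From mathcomp Require Import all_boot all_order all_algebra.
From mathcomp Require Import boolp classical_sets cardinality.
From mathcomp Require Import finmap functions wochoice.
Set Implicit Arguments. Unset Strict Implicit. Unset Printing Implicit Defensive.
Import Order.TTheory GRing.Theory.

Section Part1.
Local Open Scope classical_set_scope.
Local Open Scope ring_scope.

Lemma sum_partition_r (A : Type) (I : eqType) (W : nmodType) (l : seq A)
   (key : A -> I) (G : A -> W) (r : seq I) : uniq r ->
  all (fun q => key q \in r) l ->
  \sum_(q <- l) G q = \sum_(i <- r) \sum_(q <- l | key q == i) G q.
Proof.
move=> ur; elim: l => [|q l IH] /=.
  by move=> _; rewrite big_nil big1 // => i _; rewrite big_nil.
case/andP=> qr /IH; rewrite big_cons => ->.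
under [RHS]eq_bigr do rewrite big_cons.
rewrite [RHS](eq_bigr (fun i => (if key q == i then G q else 0) + \sum_(j <- l | key j == i) G j)); last first.
  by move=> i _; case: (key q == i); rewrite ?add0r.
rewrite big_split /=; congr (_ + _).
rewrite (bigD1_seq (key q)) //= eqxx big1 ?addr0 // => i.
by rewrite eq_sym => /negbTE ->.
Qed.

Lemma sum_partition (A : Type) (I : eqType) (W : nmodType) (l : seq A)
   (key : A -> I) (G : A -> W) :
  \sum_(q <- l) G q = \sum_(i <- undup (map key l)) \sum_(q <- l | key q == i) G q.
Proof.
apply: sum_partition_r; first exact: undup_uniq.
have -> : (fun q => key q \in undup (map key l)) = preim key (fun i => i \in undup (map key l)) by [].
by rewrite -all_map; apply/allP => i; rewrite mem_undup.
Qed.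
End Part1.

Section LinAlg2.
Variables (F : fieldType) (V : lmodType F).
Local Open Scope classical_set_scope.
Local Open Scope ring_scope.

Definition subspace (S : set V) := S 0 /\ (forall x y, S x -> S y -> S (x + y)) /\
  (forall (a : F) x, S x -> S (a *: x)).

Lemma subspace0 S : subspace S -> S 0.
Proof. by case. Qed.
Lemma subspaceD S x y : subspace S -> S x -> S y -> S (x + y).
Proof. by move=> [_ [hD _]]; apply: hD. Qed.
Lemma subspaceZ S a x : subspace S -> S x -> S (a *: x).
Proof. by move=> [_ [_ hZ]]; apply: hZ. Qed.

Lemma subspaceN S x : subspace S -> S x -> S (- x).
Proof. by move=> [_ [_ hZ]] Sx; rewrite -scaleN1r; apply: hZ. Qed.

Lemma subspaceB S x y : subspace S -> S x -> S y -> S (x - y).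
Proof. by move=> hS Sx Sy; case: (hS) => _ [hD _]; apply: hD => //; apply: subspaceN. Qed.

Lemma subspace_sumP S (I : Type) (r : seq I) (P : pred I) (f : I -> V) :
  subspace S -> (forall i, P i -> S (f i)) -> S (\sum_(i <- r | P i) f i).
Proof. by move=> [h0 [hD _]] hf; apply: big_ind => //. Qed.

Lemma subspace_sum S (I : eqType) (r : seq I) (f : I -> V) :
  subspace S -> (forall i, i \in r -> S (f i)) -> S (\sum_(i <- r) f i).
Proof. by move=> hS hf; rewrite big_seq; apply: subspace_sumP. Qed.

Definition spanl (Y : eqType) (G : Y -> V) (Z : set Y) : set V :=
  [set x | exists l : seq (F * Y), (forall q, q \in l -> Z q.2) /\
     x = \sum_(q <- l) q.1 *: G q.2].

Section Spanl.
Variables (Y : eqType) (G : Y -> V).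

Lemma spanl_subspace Z : subspace (spanl G Z).
Proof.
split; first by exists [::]; split => //; rewrite big_nil.
split.
  move=> x y [l1 [h1 ->]] [l2 [h2 ->]]; exists (l1 ++ l2); split; last by rewrite big_cat.
  by move=> q; rewrite mem_cat => /orP[/h1|/h2].
move=> a x [l [h ->]]; exists (map (fun q => (a * q.1, q.2)) l); split.
  by move=> q /mapP[q' /h ? ->].
by rewrite big_map scaler_sumr; apply: eq_bigr => q _; rewrite scalerA.
Qed.

Lemma spanl_gen Z y : Z y -> spanl G Z (G y).
Proof.
move=> Zy; exists [:: (1, y)]; split; last by rewrite big_seq1 scale1r.
by move=> q; rewrite inE => /eqP ->.
Qed.

Lemma spanl_sub Z S : subspace S -> (forall y, Z y -> S (G y)) -> spanl G Z `<=` S.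
Proof.
move=> hS hG x [l [hl ->]]; apply: subspace_sum => // q /hl Zq.
by case: hS => _ [_ hZ]; apply: hZ; apply: hG.
Qed.

Lemma spanl_mono Z Z' : Z `<=` Z' -> spanl G Z `<=` spanl G Z'.
Proof. by move=> ZZ' x [l [hl ->]]; exists l; split => // q /hl /ZZ'. Qed.

End Spanl.

Lemma span_spanl (B : set V) : Defs.span B = spanl id B.
Proof.
apply/seteqP; split => x.
  move=> [s [c [hs ->]]]; exists (map (fun v => (c v, v)) s); split.
    by move=> q /mapP[v /hs ? ->].
  by rewrite big_map.
move=> [l [hl ->]]; exists (undup (map snd l)).
exists (fun v => \sum_(q <- l | q.2 == v) q.1); split.
  by move=> v; rewrite mem_undup => /mapP[q /hl ? ->].
rewrite (sum_partition l snd); apply: eq_bigr => v _.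
rewrite scaler_suml; apply: eq_bigr => q /eqP ->; done.
Qed.

Lemma span_subspace B : subspace (Defs.span B).
Proof. rewrite span_spanl; exact: spanl_subspace. Qed.

Lemma span_gen (B : set V) x : B x -> Defs.span B x.
Proof. by rewrite span_spanl => Bx; apply: (spanl_gen id). Qed.

Lemma span_sub (B S : set V) : subspace S -> B `<=` S -> Defs.span B `<=` S.
Proof. by rewrite span_spanl => hS BS; apply: spanl_sub. Qed.

Lemma span_mono (B B' : set V) : B `<=` B' -> Defs.span B `<=` Defs.span B'.
Proof. by rewrite !span_spanl; apply: spanl_mono. Qed.

Lemma lin_indep_sub (A B : set V) : lin_indep A -> B `<=` A -> lin_indep B.
Proof. by move=> hA BA s c us hs; apply: hA => // v /hs /BA. Qed.

End LinAlg2.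

Section LinAlg3.
Variables (F : fieldType) (V : lmodType F).
Local Open Scope classical_set_scope.
Local Open Scope ring_scope.

Lemma lin_indep_add (B : set V) x : lin_indep B -> ~ Defs.span B x -> lin_indep (B `|` [set x]).
Proof.
move=> hB nx s c us hs hsum.
have hB' : forall v, v \in s -> v != x -> B v.
  by move=> v /hs [//| ->]; rewrite eqxx.
have cx0 : x \in s -> c x = 0.
  move=> xs; case: (eqVneq (c x) 0) => // cx; exfalso; apply: nx.
  move: hsum; rewrite (bigD1_seq x) //= => /eqP; rewrite addr_eq0 => /eqP h.
  have -> : x = (c x)^-1 *: (c x *: x) by rewrite scalerA mulVf // scale1r.
  rewrite h; apply: (subspaceZ _ (span_subspace B)).
  apply: (subspaceN (span_subspace B)).
  rewrite big_seq_cond; apply: (subspace_sumP _ (span_subspace B)).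
  move=> v /andP[vs vx]; apply: (subspaceZ _ (span_subspace B)).
  apply: span_gen.
  exact: hB'.
have hsum' : \sum_(v <- filter (predC1 x) s) c v *: v = 0.
  rewrite big_filter; move: hsum; rewrite (bigID (pred1 x)) /=.
  rewrite big_seq_cond big1 ?add0r // => v /andP[vs /eqP vx].
  by rewrite vx cx0 ?scale0r // -vx.
move=> v vs; case: (eqVneq v x) => [vx|vx]; first by rewrite vx cx0 // -vx.
apply: (hB (filter (predC1 x) s) c) => //; first exact: filter_uniq.
  by move=> w; rewrite mem_filter => /andP[wx ws]; apply: hB'.
by rewrite mem_filter /= vx.
Qed.

Lemma basis_ext (S I : set V) : subspace S -> I `<=` S -> lin_indep I ->
  exists BS, Defs.basis_of S BS /\ I `<=` BS.
Proof.
move=> hS IS hI.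
pose P := fun X : set V => X `<=` S /\ lin_indep (I `|` X).
have chainP : forall Fm : set (set V), Fm `<=` P -> total_on Fm subset ->
    P (\bigcup_(X in Fm) X).
  move=> Fm FP tot; split.
    by move=> x [X FX Xx]; case: (FP X FX) => + _; apply.
  move=> s c us hs.
  have [X [hX hXs]] : exists X, (Fm X \/ X = set0) /\
      forall v, v \in s -> (I `|` X) v.
    elim: s {us c} hs => [|a s IH] hs.
      by exists set0; split; [right|].
    have [|X [hX hXs]] := IH.
      by move=> v vs; apply: hs; rewrite in_cons vs orbT.
    have := hs a (mem_head _ _); case=> [Ia|[Y FY Ya]].
      exists X; split => // v; rewrite in_cons => /orP[/eqP->|]; first by left.
      exact: hXs.
    case: hX => [FX|X0].
      case: (tot X Y FX FY) => XY.
        exists Y; split; first by left.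
        move=> v; rewrite in_cons => /orP[/eqP->|/hXs]; first by right.
        by case=> [?|/XY ?]; [left|right].
      exists X; split; first by left.
      move=> v; rewrite in_cons => /orP[/eqP->|/hXs //]; first by right; apply: XY.
    exists Y; split; first by left.
    move=> v; rewrite in_cons => /orP[/eqP->|/hXs]; first by right.
    by rewrite X0 => -[?|//]; left.
  have hIX : lin_indep (I `|` X).
    case: hX => [/FP [] //|->]; rewrite setU0; exact: hI.
  exact: hIX.
have [A [[AS hA] maxA]] := Zorn_bigcup chainP.
exists (I `|` A); split; last by move=> x Ix; left.
split; first by move=> x [/IS|/AS].
split => //.
apply/seteqP; split; first by apply: span_sub => // x [/IS|/AS].
move=> x Sx; apply: contrapT => nx.
apply: (maxA (A `|` [set x])).
  split; first by move=> y Ay; left.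
  move=> h; have Ax := h x (or_intror erefl).
  by apply: nx; apply: span_gen; right.
split; first by move=> y [/AS|->].
rewrite setUA; exact: lin_indep_add.
Qed.

End LinAlg3.

Section LinAlg4.
Variables (F : fieldType) (V : lmodType F).
Local Open Scope classical_set_scope.
Local Open Scope ring_scope.

Lemma steinitz (s t : seq V) : uniq s -> uniq t -> lin_indep [set` t] ->
  (forall v, v \in t -> Defs.span [set` s] v) -> (size t <= size s)%N.
Proof.
move=> us ut hI hspan; rewrite leqNgt; apply/negP => hlt.
have rep : forall i : 'I_(size t), exists a : 'I_(size s) -> F,
    t`_i = \sum_(j < size s) a j *: s`_j.
  move=> i; have := hspan (t`_i) (mem_nth 0 (ltn_ord i)).
  rewrite span_spanl => -[l [hl ->]].
  exists (fun j => \sum_(q <- l | q.2 == s`_j) q.1).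
  rewrite (@sum_partition_r _ _ _ l snd (fun q => q.1 *: id q.2) s us); last first.
    by apply/allP => q /hl.
  rewrite (big_nth 0) big_mkord; apply: eq_bigr => j _; rewrite scaler_suml.
  by apply: eq_bigr => q /eqP ->.
have [a ha] := choice rep.
pose A := \matrix_(i < size t, j < size s) a i j.
pose K := kermx A.
have hK : K != 0.
  rewrite -mxrank_eq0 mxrank_ker subn_eq0 -ltnNge.
  exact: leq_ltn_trans (rank_leq_col A) hlt.
have /existsP[i0 hi0] : [exists i0, row i0 K != 0].
  apply: contraNT hK => /existsPn H; apply/eqP/row_matrixP => i.
  by rewrite row0; apply/eqP; exact: negbNE (H i).
pose c := row i0 K.
have cA : c *m A = 0 by rewrite -row_mul mulmx_ker row0.
pose cf := fun v : V => c 0 (insubd i0 (index v t)).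
have cft : forall i : 'I_(size t), cf t`_i = c 0 i.
  move=> i; rewrite /cf; congr (c 0 _); apply: val_inj.
  by rewrite insubdK ?index_uniq // unfold_in ltn_ord.
have hsum : \sum_(v <- t) cf v *: v = 0.
  rewrite (big_nth 0) big_mkord.
  rewrite (eq_bigr (fun i : 'I_(size t) => c 0 i *: t`_i)); last by move=> i _; rewrite cft.
  under eq_bigr => i _ do rewrite ha scaler_sumr.
  rewrite exchange_big /= big1 // => j _.
  have := congr1 (fun M : 'rV[F]_(size s) => M 0 j) cA; rewrite !mxE /= => h.
  rewrite -[RHS](scale0r s`_j) -h scaler_suml; apply: eq_bigr => i _.
  by rewrite scalerA /A mxE.
have := hI t cf ut (fun v vt => vt) hsum.
move=> H; move: hi0; rewrite -/c => /eqP; apply; apply/rowP => j.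
by rewrite [RHS]mxE -cft; apply: H; apply: mem_nth.
Qed.

End LinAlg4.

Local Open Scope classical_set_scope.

Lemma mk_card_le (T U : Type) (A : set T) (B : set U) (f : T -> U) :
  (forall x, A x -> B (f x)) -> (forall x y, A x -> A y -> f x = f y -> x = y) ->
  (A #<= B)%card.
Proof.
move=> hf hi.
have [g] : $|{injfun A >-> B}|.
  apply/injfunPex; exists f; first by move=> x; apply: hf.
  by move=> x y /set_mem Ax /set_mem Ay; apply: hi.
exact: inj_card_le g.
Qed.

Lemma card_le_fun (T U : Type) (A : set T) (B : set U) (u0 : U) : (A #<= B)%card ->
  exists f : T -> U, (forall x, A x -> B (f x)) /\ (forall x y, A x -> A y -> f x = f y -> x = y).
Proof.
move=> /card_leP [g].
exists (fun x => match pselect (A x) with left h => \val (g (exist _ x (mem_set h))) | right _ => u0 end).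
split.
  move=> x Ax; case: pselect => // h.
  by have := set_valP (g (exist _ x (mem_set h))).
move=> x y Ax Ay; case: pselect => // hx; case: pselect => // hy.
move=> e; have e1 := val_inj e; have e2 := injT e1.
by have := congr1 val e2.
Qed.

Section FinArg.
Variables (F : fieldType) (V : lmodType F).
Local Open Scope ring_scope.

Lemma spanl_span_seq (Y : eqType) (G : Y -> V) (s : seq Y) :
  spanl G [set` s] `<=` Defs.span [set` map G s].
Proof.
rewrite span_spanl => x [l [hl ->]]; exists (map (fun q => (q.1, G q.2)) l); split.
  by move=> q /mapP[q' /hl h ->] /=; apply: map_f.
by rewrite big_map.
Qed.

Lemma lin_indep_fin (I : set V) (s : seq V) : lin_indep I ->
  I `<=` Defs.span [set` s] -> finite_set I.
Proof.
move=> hI hIs; apply: contrapT => inf.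
have [Bf BfI cardB] := infinite_set_fset (size (undup s)).+1 inf.
have := @steinitz F V (undup s) Bf (undup_uniq s) (fset_uniq Bf).
have -> : [set` undup s] = [set` s] by apply/seteqP; split => x /=; rewrite mem_undup.
move=> /(_ (lin_indep_sub hI BfI)) /(_ (fun v vB => hIs v (BfI v vB))).
by move/(leq_ltn_trans)/(_ cardB); rewrite ltnn.
Qed.

Lemma fin_arg (Y : eqType) (G : Y -> V) (Z : set Y) (I : set V) :
  lin_indep I -> I `<=` spanl G Z ->
  (I #<= [set p : seq Y * nat | forall y, y \in p.1 -> Z y])%card.
Proof.
move=> hI hIZ.
have hs : forall v, exists s : seq Y, I v -> (forall y, y \in s -> Z y) /\ spanl G [set` s] v.
  move=> v; case: (pselect (I v)) => Iv; last by exists [::].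
  have [l [hl ev]] := hIZ v Iv; exists (map snd l) => _; split.
    by move=> y /mapP[q /hl ? ->].
  by exists l; split => // q ql; apply: map_f.
have [sg hsg] := choice hs.
pose E s0 := [set v | I v /\ sg v = s0].
have finE : forall s0, finite_set (E s0).
  move=> s0; apply: (@lin_indep_fin _ (map G s0)).
    by apply: lin_indep_sub hI _ => v [].
  by move=> v [Iv <-]; apply: spanl_span_seq; exact: (hsg v Iv).2.
apply: (@mk_card_le _ _ _ _ (fun v => (sg v, index v (fset_set (E (sg v)))))).
  by move=> v Iv; exact: (hsg v Iv).1.
move=> v w Iv Iw [e1]; rewrite e1 => e2.
have vin : v \in fset_set (E (sg w)) by rewrite in_fset_set //; apply/mem_set; split.
have win : w \in fset_set (E (sg w)) by rewrite in_fset_set //; apply/mem_set.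
by rewrite -(nth_index v vin) e2 nth_index.
Qed.

End FinArg.

Section Eigen.
Variables (F : fieldType) (V : lmodType F) (u : {linear V -> V}) (N : set V).
Hypotheses (hN : subspace N) (hNu : forall x, N x -> N (u x)).
Local Open Scope classical_set_scope.
Local Open Scope ring_scope.

Let E x l := N (u x - l *: x).

Let e1 x l : N x -> E x l.
Proof. by move=> Nx; apply: subspaceB => //; [apply: hNu|apply: subspaceZ]. Qed.

Let e2a x y l : E x l -> E y l -> E (x + y) l.
Proof.
by move=> hx hy; rewrite /E linearD scalerDr opprD addrACA; apply: subspaceD.
Qed.

Let e2b x c l : E x l -> E (c *: x) l.
Proof.
move=> hx; rewrite /E linearZ /= scalerA mulrC -scalerA -scalerBr.
exact: subspaceZ.
Qed.

Let shiftE y l m : u y - m *: y = (u y - l *: y) + (l - m) *: y.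
Proof. by rewrite scalerBl addrA subrK. Qed.

Lemma non_eigen : ~ (exists l, forall x, N (u x - l *: x)) ->
  exists x, forall c1 c2 : F, N (c1 *: x + c2 *: u x) -> c1 = 0 /\ c2 = 0.
Proof.
move=> nex; apply: contrapT => H.
have H' : forall x, ~ N x -> exists l, E x l.
  move=> x nx.
  have [c1 [c2 [hc nc]]] : exists c1 c2 : F, N (c1 *: x + c2 *: u x) /\ ~ (c1 = 0 /\ c2 = 0).
    apply: contrapT => K; apply: H; exists x => c1 c2 hc; apply: contrapT => nc.
    by apply: K; exists c1, c2.
  case: (eqVneq c2 0) => [c20|c2n0].
    move: hc nc; rewrite c20 scale0r addr0 => hc nc.
    case: (eqVneq c1 0) => [c10|c1n0]; first by exfalso; apply: nc.
    exfalso; apply: nx; have -> : x = c1^-1 *: (c1 *: x) by rewrite scalerA mulVf // scale1r.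
    exact: subspaceZ.
  exists (- (c1 / c2)); rewrite /E.
  have -> : u x - (- (c1 / c2)) *: x = c2^-1 *: (c1 *: x + c2 *: u x).
    by rewrite scalerDr !scalerA mulVf // scale1r scaleNr opprK addrC mulrC.
  exact: subspaceZ.
have [x0 nx0] : exists x0, ~ N x0.
  apply: contrapT => K; apply: nex; exists 0 => x; rewrite scale0r subr0.
  by apply: hNu; apply: contrapT => nx; apply: K; exists x.
have [l0 hl0] := H' x0 nx0.
apply: nex; exists l0 => y.
case: (pselect (N y)) => Ny; first exact: e1.
have [ly hly] := H' y Ny.
case: (eqVneq ly l0) => [lyl0|lyl0]; first by rewrite -lyl0.
case: (pselect (N (y + x0))) => Nz.
  have -> : y = (y + x0) + (-1) *: x0 by rewrite scaleN1r addrK.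
  by apply: e2a; [apply: e1|apply: e2b].
have [lz hlz] := H' _ Nz.
have hw : N ((ly - lz) *: y + (l0 - lz) *: x0).
  have h1 : E (y + x0) lz := hlz.
  move: h1; rewrite /E linearD scalerDr opprD addrACA.
  rewrite (shiftE y ly lz) (shiftE x0 l0 lz) addrACA => h1.
  have := subspaceB hN h1 (subspaceD hN hly hl0).
  by rewrite [X in N X -> _]addrAC subrr add0r.
case: (eqVneq ly lz) => [lylz|lylz].
  exfalso; apply: nx0; move: hw; rewrite lylz subrr scale0r add0r => hw.
  have hl : l0 - lz != 0 by rewrite subr_eq0 -lylz eq_sym.
  have -> : x0 = (l0 - lz)^-1 *: ((l0 - lz) *: x0) by rewrite scalerA mulVf // scale1r.
  exact: subspaceZ.
have hl : ly - lz != 0 by rewrite subr_eq0.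
pose n := (ly - lz)^-1 *: ((ly - lz) *: y + (l0 - lz) *: x0).
have Nn : N n by apply: subspaceZ.
have -> : y = n + (- ((ly - lz)^-1 * (l0 - lz))) *: x0.
  by rewrite /n scalerDr !scalerA mulVf // scale1r scaleNr addrK.
by apply: e2a; [apply: e1|apply: e2b].
Qed.

End Eigen.

Local Open Scope classical_set_scope.

Section WO.
Variables (T : eqType) (R : rel T) (hR : well_order R).

Lemma wo_min (A : set T) : A !=set0 -> exists z, A z /\ forall y, A y -> R z y.
Proof.
move=> [x Ax].
have ne : nonempty (fun y => `[< A y >]) by exists x; rewrite unfold_in; apply/asboolP.
have [z [[Az lb] _]] := hR ne.
exists z; split; first by move: Az; rewrite unfold_in => /asboolP.
by move=> y Ay; apply: lb; rewrite unfold_in; apply/asboolP.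
Qed.

Lemma wo_total : total R.
Proof.
move=> x y; have [|z [[->|->] lb]] := @wo_min (fun w => w = x \/ w = y).
- by exists x; left.
- by rewrite lb //; right.
- by rewrite (lb x) ?orbT //; left.
Qed.

Lemma wo_refl : reflexive R.
Proof. by move=> x; have := wo_total x x; rewrite orbb. Qed.

Lemma wo_anti : antisymmetric R.
Proof.
move=> x y /andP[xy yx].
have ne : nonempty (fun w => (w == x) || (w == y)) by exists x; rewrite unfold_in eqxx.
have [z [_ uz]] := hR ne.
have hx : minimum_of R (fun w => (w == x) || (w == y)) x.
  split; first by rewrite unfold_in eqxx.
  by move=> w; rewrite unfold_in => /orP[/eqP->|/eqP->] //; apply: wo_refl.
have hy : minimum_of R (fun w => (w == x) || (w == y)) y.
  split; first by rewrite unfold_in eqxx orbT.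
  by move=> w; rewrite unfold_in => /orP[/eqP->|/eqP->] //; apply: wo_refl.
by rewrite -(uz x hx) (uz y hy).
Qed.

Lemma wo_trans : transitive R.
Proof.
move=> y x z xy yz.
have [|m [hm lb]] := @wo_min (fun w => [\/ w = x, w = y | w = z]).
  by exists x; constructor.
case: hm => hm; subst m.
- by apply: lb; constructor 3.
- have yx := lb x (Or31 _ _ (erefl x)).
  by rewrite (@wo_anti x y) ?xy ?yx.
- have zy := lb y (Or32 _ _ (erefl y)).
  by rewrite -(@wo_anti y z) ?yz ?zy.
Qed.

End WO.

Section Lex.
Variables (T U : eqType) (key : T -> U) (leU : rel U) (leT : rel T).
Hypotheses (leU_refl : reflexive leU) (leU_anti : antisymmetric leU)
  (leU_trans : transitive leU) (leU_total : total leU).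
Hypotheses (leT_refl : reflexive leT) (leT_trans : transitive leT)
  (leT_total : total leT)
  (leT_anti : forall x y, key x = key y -> leT x y -> leT y x -> x = y).

Definition lexle x y := (leU (key x) (key y) && (key x != key y)) ||
  ((key x == key y) && leT x y).

Lemma lexle_refl : reflexive lexle.
Proof. by move=> x; rewrite /lexle eqxx leT_refl orbT. Qed.

Lemma lexle_anti : antisymmetric lexle.
Proof.
move=> x y /andP[]; rewrite /lexle.
case: (eqVneq (key x) (key y)) => [e|ne] /=.
  by rewrite !andbF /= => hxy hyx; apply: leT_anti.
rewrite !andbT !orbF => h1 h2.
by move: ne; rewrite (@leU_anti (key x) (key y)) ?h1 ?h2 ?eqxx.
Qed.

Lemma lexle_trans : transitive lexle.
Proof.
move=> y x z; rewrite /lexle.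
case: (eqVneq (key x) (key y)) => [exy|nxy] /=;
case: (eqVneq (key y) (key z)) => [eyz|nyz] /=; rewrite ?andbT ?andbF ?orbF /=.
- by rewrite exy eyz eqxx /= andbF /=; apply: leT_trans.
- by rewrite exy nyz /= => _ ->.
- by rewrite -eyz nxy /= => ->.
move=> h1 h2; have h3 : leU (key x) (key z) by apply: leU_trans h1 h2.
case: (eqVneq (key x) (key z)) => [exz|nxz]; last by rewrite h3.
by move: nxy; rewrite exz (@leU_anti (key y) (key z)) ?h2 -?exz ?h1 ?eqxx.
Qed.

Lemma lexle_total : total lexle.
Proof.
move=> x y; rewrite /lexle.
move: (leT_total x y) (leU_total (key x) (key y)).
case: (eqVneq (key x) (key y)) => [e|ne] /=; first by rewrite !andbF.
by rewrite !andbT !orbF.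
Qed.
Lemma dummy_total : True.
Proof. by [].
Qed.

Lemma lexle_min
  (hU : forall A : set U, A !=set0 -> exists z, A z /\ forall y, A y -> leU z y)
  (hT : forall A : set T, A !=set0 -> (forall x y, A x -> A y -> key x = key y) ->
          exists z, A z /\ forall y, A y -> leT z y) :
  forall A : set T, A !=set0 -> exists z, A z /\ forall y, A y -> lexle z y.
Proof.
move=> A [x0 Ax0].
have [zu [[x1 Ax1 <-] lbu]] := hU (key @` A) (ex_intro _ (key x0) (ex_intro2 _ _ x0 Ax0 erefl)).
have [z [[Az kz] lbz]] := hT (fun y => A y /\ key y = key x1) (ex_intro _ x1 (conj Ax1 erefl))
  (fun x y hx hy => etrans hx.2 (esym hy.2)).
exists z; split => // y Ay; rewrite /lexle kz.
case: (eqVneq (key x1) (key y)) => [e|ne] /=.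
  by rewrite lbz ?orbT //; split.
by rewrite lbu //; exists y.
Qed.

End Lex.

Fact wo_display : Order.disp_t. Proof. exact: Order.Disp tt tt. Qed.

Section WoType.
Variables (T : choiceType) (le : rel T) (le_refl : reflexive le)
  (le_anti : antisymmetric le) (le_trans : transitive le) (le_total : total le).
Definition wo_type of reflexive le & antisymmetric le & transitive le & total le : Type := T.
Local Notation wT := (wo_type le_refl le_anti le_trans le_total).
HB.instance Definition _ := Choice.on wT.
HB.instance Definition _ := @Order.Le_isPOrder.Build wo_display wT le le_refl le_anti le_trans.
HB.instance Definition _ := @Order.POrder_isTotal.Build wo_display wT le_total.
Lemma wo_typeE (x y : wT) : (x <= y)%O = le x y.
Proof. by []. Qed.
End WoType.

Local Open Scope classical_set_scope.

Section Enc.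
Variable K0 : eqType.
Notation X := (seq (nat + K0)).

Definition Theta (S : set K0) : set X := [set w | forall k, inr k \in w -> S k].

Definition enc_list (ws : seq X) : X := flatten (map (fun w => inl (size w) :: w) ws).

Lemma enc_list_inj : injective enc_list.
Proof.
elim=> [|w1 ws1 IH] [|w2 ws2] //=.
move=> [e1]; move/eqP; rewrite eqseq_cat // => /andP[/eqP e2 /eqP e3].
by rewrite e2 (IH _ e3).
Qed.

Lemma enc_list_leaf k ws : inr k \in enc_list ws -> exists2 w, w \in ws & inr k \in w.
Proof.
elim: ws => [|w ws IH] //=; rewrite in_cons => /orP[//|]; rewrite mem_cat => /orP[kw|].
  by exists w; rewrite ?mem_head.
by case/IH => w' w'in kw'; exists w'; rewrite ?in_cons ?w'in ?orbT.
Qed.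

Lemma Theta_sub (S S' : set K0) : S `<=` S' -> Theta S `<=` Theta S'.
Proof. by move=> SS' w hw k /hw /SS'. Qed.

Lemma card_enc (S : set K0) :
  ([set p : seq X * nat | forall w, w \in p.1 -> Theta S w] #<= Theta S)%card.
Proof.
apply: (@mk_card_le _ _ _ _ (fun p => inl p.2 :: enc_list p.1)).
  move=> p hp k; rewrite in_cons /= => /enc_list_leaf [w win kw].
  exact: hp win k kw.
by move=> [p1 p2] [q1 q2] _ _ [-> /enc_list_inj ->].
Qed.

Definition relabel (d : K0) (w : X) : X :=
  map (fun e => match e with inl n => inl n.+1 | inr k => if k == d then inl 0 else inr k end) w.

Lemma relabel_inj d : injective (relabel d).
Proof.
apply: inj_map => [[n|k] [n'|k']] /=.
- by move=> [->].
- by case: eqP.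
- by case: eqP.
- by case: eqP => [->|_]; case: eqP => [->|_] // [->].
Qed.

Lemma relabel_leaf d k w : inr k \in relabel d w -> inr k \in w /\ k != d.
Proof.
elim: w => [|e w IH] //=; rewrite !in_cons => /orP[|/IH[h1 h2]]; last by rewrite h1 orbT.
case: e => [n|k'] //=; case: (eqVneq k' d) => [//|nd] /eqP [ek].
by rewrite ek eqxx.
Qed.
Lemma Theta0_countable : countable (Theta set0).
Proof.
apply: (@card_le_trans _ _ _ [set: seq nat]); last exact: countableP.
apply: (@mk_card_le _ _ _ _ (map (fun e => match e with inl n => n | inr _ => 0%N end))) => //.
elim=> [|e1 w1 IH] [|e2 w2] //= h1 h2.
have h1' : Theta set0 w1 by move=> k kw; apply: (h1 k); rewrite in_cons kw orbT.
have h2' : Theta set0 w2 by move=> k kw; apply: (h2 k); rewrite in_cons kw orbT.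
case: e1 h1 => [n1|k1] h1; last by case: (h1 k1); rewrite mem_head.
case: e2 h2 => [n2|k2] h2; last by case: (h2 k2); rewrite mem_head.
by move=> [-> /(IH _ h1' h2') ->].
Qed.

End Enc.

Section SubEnc.
Variables (V0 : eqType) (P : pred V0).
Notation K := {x : V0 | P x}.

Definition upK (w : seq (nat + K)) : seq (nat + V0) :=
  map (fun e => match e with inl n => inl n | inr k => inr (val k) end) w.

Lemma upK_inj : injective upK.
Proof. by apply: inj_map => [[n|k] [n2|k2]] //= [] // e; [rewrite e|rewrite (val_inj e)]. Qed.

Lemma upK_leaf v w : inr v \in upK w -> exists2 k : K, v = val k & inr k \in w.
Proof.
elim: w => [|e w IH] //=; rewrite in_cons => /orP[|/IH[k vk kw]].
  by case: e => [n|k] // /eqP [->]; exists k; rewrite ?mem_head.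
by exists k; rewrite // in_cons kw orbT.
Qed.

Definition lowK (w : seq (nat + V0)) : seq (nat + K) :=
  map (fun e => match e with inl n => inl n
    | inr v => match insub v with Some k => inr k | None => inl 0%N end end) w.

Lemma lowK_elt_inj (e1 e2 : nat + V0) : (forall v, e1 = inr v -> P v) ->
  (forall v, e2 = inr v -> P v) ->
  (match e1 with inl n => inl n
    | inr v => match insub v with Some k => inr k | None => inl 0%N end end : nat + K) =
  (match e2 with inl n => inl n
    | inr v => match insub v with Some k => inr k | None => inl 0%N end end) -> e1 = e2.
Proof.
case: e1 => [n1|v1]; case: e2 => [n2|v2] //=.
- by move=> _ _ [->].
- by move=> _ /(_ v2 erefl) P2; rewrite insubT.
- by move=> /(_ v1 erefl) P1 _; rewrite insubT.
- by move=> /(_ v1 erefl) P1 /(_ v2 erefl) P2; rewrite !insubT => -[] ->.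
Qed.

Lemma lowK_inj w1 w2 : Theta P w1 -> Theta P w2 -> lowK w1 = lowK w2 -> w1 = w2.
Proof.
elim: w1 w2 => [|e1 w1 IH] [|e2 w2] //= h1 h2.
have h1' : Theta P w1 by move=> k kw; apply: (h1 k); rewrite in_cons kw orbT.
have h2' : Theta P w2 by move=> k kw; apply: (h2 k); rewrite in_cons kw orbT.
move=> [e12 /(IH _ h1' h2') ->]; congr (_ :: _).
apply: lowK_elt_inj e12.
  by move=> v ev; apply: h1; rewrite ev mem_head.
by move=> v ev; apply: h2; rewrite ev mem_head.
Qed.

Lemma lowK_leaf k w : inr k \in lowK w -> inr (val k) \in w.
Proof.
elim: w => [|e w IH] //=; rewrite !in_cons => /orP[|/IH ->]; last by rewrite orbT.
case: e => [n|v] //=; case: insubP => [k' Pv vk'|] // /eqP [->].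
by rewrite vk' eqxx.
Qed.

End SubEnc.

Section MainOrder.
Local Open Scope classical_set_scope.
Variables (V : choiceType) (R : rel V) (hR : well_order R) (P : pred V).

Definition K := {v : V | P v}.
Notation X := (seq (nat + K)).

Definition leK (a b : K) := R (val a) (val b).

Definition optle (o o' : option K) := match o, o' with
  | None, _ => true | Some _, None => false | Some a, Some b => leK a b end.

Lemma optle_refl : reflexive optle.
Proof. by case=> [a|] //=; apply: (wo_refl hR). Qed.
Lemma optle_anti : antisymmetric optle.
Proof.
case=> [a|] [b|] //= /andP[h1 h2]; congr Some; apply: val_inj.
by apply: (wo_anti hR); rewrite -/(leK a b) h1 -/(leK b a) h2.
Qed.
Lemma optle_trans : transitive optle.
Proof. by case=> [b|] [a|] [c|] //=; apply: (wo_trans hR). Qed.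
Lemma optle_total : total optle.
Proof. by case=> [a|] [b|] //=; apply: (wo_total hR). Qed.

Definition omax o o' := if optle o o' then o' else o.
Lemma omax_l o o' : optle o (omax o o').
Proof. by rewrite /omax; case: ifP => // _; apply: optle_refl. Qed.
Lemma omax_r o o' : optle o' (omax o o').
Proof.
rewrite /omax; case: ifP => h; first exact: optle_refl.
by have := optle_total o o'; rewrite h.
Qed.

Definition mx (w : X) : option K :=
  foldr (fun e o => match e with inl _ => o | inr k => omax (Some k) o end) None w.

Lemma mx_leaf k w : inr k \in w -> exists m, mx w = Some m /\ leK k m.
Proof.
elim: w => [|e w IH] //=; rewrite in_cons => /orP[/eqP <-|/IH[m [hm km]]].
  by case: (omax _ _) (omax_l (Some k) (mx w)) => // m h; exists m.
case: e => [n|k'] //; first by exists m.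
case: (omax _ _) (omax_r (Some k') (mx w)) => [m'|]; rewrite hm // => h.
by exists m'; split => //; apply: (wo_trans hR) km h.
Qed.

Lemma mx_some w m : mx w = Some m -> inr m \in w.
Proof.
elim: w => [|e w IH] //=; case: e => [n|k] /=; first by move=> /IH; rewrite in_cons orbC => ->.
rewrite /omax; case: ifP => _ /=; last by move=> [->]; rewrite mem_head.
by move=> /IH; rewrite in_cons orbC => ->.
Qed.

Let R2 := sval (well_ordering_principle X).
Let hR2 : well_order R2 := svalP (well_ordering_principle _).

Definition leX : rel X := lexle mx optle R2.

Lemma leX_refl : reflexive leX.
Proof. by apply: lexle_refl; apply: wo_refl hR2. Qed.
Lemma leX_anti : antisymmetric leX.
Proof.
apply: lexle_anti; first exact: optle_anti.
by move=> x y _ h1 h2; apply: (wo_anti hR2); rewrite h1 h2.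
Qed.
Lemma leX_trans : transitive leX.
Proof.
apply: lexle_trans; [exact: optle_anti|exact: optle_trans|exact: (wo_trans hR2)].
Qed.
Lemma leX_total : total leX.
Proof. apply: lexle_total; [exact: optle_total|exact: (wo_total hR2)]. Qed.

Lemma optle_min (A : set (option K)) : A !=set0 -> exists z, A z /\ forall y, A y -> optle z y.
Proof.
move=> [o0 Ao0]; case: (pselect (A None)) => [AN|nAN]; first by exists None.
have ne : (fun v => exists2 k : K, val k = v & A (Some k)) !=set0.
  case: o0 Ao0 => [k|] Ak; last by [].
  by exists (val k), k.
have [v0 [[k0 ek0 Ak0] lb]] := wo_min hR ne.
exists (Some k0); split => // -[k|] Ak //=.
by rewrite /leK ek0; apply: lb; exists k.
Qed.

Lemma leX_min (A : set X) : A !=set0 -> exists z, A z /\ forall y, A y -> leX z y.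
Proof.
apply: lexle_min; first exact: optle_min.
by move=> A' hA' _; apply: wo_min hR2 _ hA'.
Qed.

Definition leN (p q : X * nat) := (p.2 <= q.2)%N.
Definition leD : rel (X * nat) := lexle fst leX leN.

Lemma leD_refl : reflexive leD.
Proof. by apply: lexle_refl => p; apply: leqnn. Qed.
Lemma leD_anti : antisymmetric leD.
Proof.
apply: lexle_anti; first exact: leX_anti.
move=> [x1 n1] [x2 n2] /= -> h1 h2; congr (_, _); apply/eqP.
by rewrite eqn_leq; apply/andP; split.
Qed.
Lemma leD_trans : transitive leD.
Proof.
apply: lexle_trans; [exact: leX_anti|exact: leX_trans|].
by move=> q p r; apply: leq_trans.
Qed.
Lemma leD_total : total leD.
Proof. apply: lexle_total; [exact: leX_total|by move=> p q; apply: leq_total]. Qed.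

Lemma leD_min (A : set (X * nat)) : A !=set0 ->
  exists z, A z /\ forall y, A y -> leD z y.
Proof.
apply: lexle_min; first exact: leX_min.
move=> A' [p0 Ap0] _.
pose Pn := fun n => `[< exists p, A' p /\ p.2 = n >].
have exPn : exists n, Pn n by exists p0.2; apply/asboolP; exists p0.
case: (ex_minnP exPn) => m /asboolP [p [Ap pm]] lbm.
exists p; split => // q Aq; rewrite /leN pm; apply: lbm.
by apply/asboolP; exists q.
Qed.

Definition D := wo_type leD_refl leD_anti leD_trans leD_total.

Lemma leDE (a b : D) : (a <= b)%O = leD a b.
Proof. by []. Qed.

Lemma D_well_ordered : well_ordered D.
Proof. move=> A hA; exact: leD_min hA. Qed.

End MainOrder.

Section Peval.
Variables (F : fieldType) (V : lmodType F) (u : V -> V).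
Local Open Scope ring_scope.

Lemma peval_ext (p : {poly F}) x n : (size p <= n)%N ->
  peval u p x = \sum_(i < n) p`_i *: iter i u x.
Proof.
move=> hn; rewrite /peval (big_ord_widen n (fun i => p`_i *: iter i u x) hn).
rewrite big_mkcond; apply: eq_bigr => i _; case: ifP => // /negbT.
by rewrite -leqNgt => /(nth_default 0) ->; rewrite scale0r.
Qed.

Lemma pevalD p q x : peval u (p + q) x = peval u p x + peval u q x.
Proof.
pose n := maxn (size p) (size q).
rewrite (@peval_ext _ _ n) ?(leq_trans (size_polyD _ _)) //.
rewrite (@peval_ext p _ n) ?leq_maxl // (@peval_ext q _ n) ?leq_maxr //.
by rewrite -big_split; apply: eq_bigr => i _; rewrite coefD scalerDl.
Qed.

Lemma peval0 x : peval u 0 x = 0.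
Proof. by rewrite /peval size_poly0 big_ord0. Qed.

Lemma pevalZ c p x : peval u (c *: p) x = c *: peval u p x.
Proof.
rewrite (@peval_ext _ _ (size p)) ?size_scale_leq // /peval scaler_sumr.
by apply: eq_bigr => i _; rewrite coefZ scalerA.
Qed.

Lemma pevalXn k x : peval u 'X^k x = iter k u x.
Proof.
rewrite /peval size_polyXn big_ord_recr /= coefXn eqxx scale1r big1 ?add0r //.
by move=> i _; rewrite coefXn (ltn_eqF (ltn_ord i)) scale0r.
Qed.

Lemma peval_sum (I : Type) (r : seq I) (Pr : pred I) (c : I -> F) (k : I -> nat) x :
  peval u (\sum_(i <- r | Pr i) c i *: 'X^(k i)) x = \sum_(i <- r | Pr i) c i *: iter (k i) u x.
Proof.
rewrite (big_morph (fun p => peval u p x) (fun p q => pevalD p q x) (peval0 x)).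
by apply: eq_bigr => i _; rewrite pevalZ pevalXn.
Qed.
End Peval.

Section Main.
Local Open Scope classical_set_scope.
Local Open Scope ring_scope.
Variables (F : fieldType) (V : lmodType F) (u : {linear V -> V}) (B : set V).
Hypothesis hB : Defs.basis_of setT B.
Variable Tb : F -> set V.
Hypothesis hTbad : forall (Y : eqType) (g : Y -> V) (Z : set Y) (l : F),
  (forall x, spanl g Z (u x - l *: x)) ->
  (Tb l #<= [set p : seq Y * nat | forall y, y \in p.1 -> Z y])%card.
Variable R : rel V.
Hypothesis hR : well_order R.
Variable P : pred V.
Hypothesis P1 : forall v, P v -> forall l,
  ~ (Tb l #<= Theta [set w | R w v && (w != v)])%card.
Variable k0 : K P.
Variable iota : V -> seq (nat + K P).
Hypothesis iota_inj : forall b b', B b -> B b' -> iota b = iota b' -> b = b'.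
Hypothesis iota_leaf : forall b, B b -> exists k, inr k \in iota b.

Notation KK := (K P).
Notation X := (seq (nat + KK)).
Notation DD := (D hR P).
Notation leXX := (@leX V R P).
Notation mxx := (@mx V R P).

Lemma smallK (d : KK) l : ~ (Tb l #<= Theta (fun k : KK => R (val k) (val d)))%card.
Proof.
move=> h; apply: (P1 (valP d) (l := l)).
apply: (card_le_trans h).
apply: (@card_le_trans _ _ _ (Theta (fun k : KK => R (val k) (val d) && (k != d)))).
  apply: (@mk_card_le _ _ _ _ (relabel d)); last by move=> w1 w2 _ _ /relabel_inj.
  by move=> w hw k /relabel_leaf [kw kd]; rewrite hw.
apply: (@mk_card_le _ _ _ _ (@upK V P)); last by move=> w1 w2 _ _ /upK_inj.
move=> w hw v /upK_leaf [k -> kw]; have /andP[h1 h2] := hw k kw.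
by rewrite /= h1 /=; apply: contra h2 => /eqP /val_inj ->.
Qed.

Lemma small0 l : ~ (Tb l #<= Theta (@set0 KK))%card.
Proof.
move=> h; apply: (smallK (d := k0) (l := l)); apply: (card_le_trans h).
by apply: subset_card_le; apply: Theta_sub.
Qed.

Definition ltD (a b : DD) := (a < b)%O.

Lemma wfD : well_founded ltD.
Proof.
move=> a; apply: contrapT => na.
have [m [nm lb]] := D_well_ordered (A := fun a => ~ Acc ltD a) (ex_intro _ a na).
apply: nm; constructor => b hb; apply: contrapT => nb.
by have := lb b nb; rewrite leNgt -/(ltD b m) hb.
Qed.

Definition gq (xf : DD -> V) (q : DD * nat) : V := iter q.2 u (xf q.1).
Definition Nst (xf : DD -> V) (a : DD) : set V := spanl (gq xf) [set q | (q.1 < a)%O].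
Definition ltX (t t' : X) := leXX t t' && (t != t').
Definition islim (a : DD) : Prop := a.2 = 0%N /\ exists t, ltX t a.1.
Definition step (a : DD) (N : set V) : V :=
  if pselect (islim a) then
    (if pselect (exists b, B b /\ iota b = a.1 /\ ~ N b)
     then xget 0 (fun b => B b /\ iota b = a.1 /\ ~ N b)
     else xget 0 (fun y => ~ N y))
  else xget 0 (fun y => forall c1 c2 : F, N (c1 *: y + c2 *: u y) -> c1 = 0 /\ c2 = 0).
Definition Frec (a : DD) (h : forall b, ltD b a -> V) : V :=
  step a (Nst (fun b => match pselect (ltD b a) with left pf => h b pf | right _ => 0 end) a).
Definition xs : DD -> V := Fix wfD (fun _ => V) Frec.

Lemma spanl_ext (Y : eqType) (G1 G2 : Y -> V) (Z : set Y) :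
  (forall y, Z y -> G1 y = G2 y) -> spanl G1 Z = spanl G2 Z.
Proof.
move=> hG; apply/seteqP; split => x [l [hl ->]]; exists l; split => //;
  by apply: eq_big_seq => q /hl hq; rewrite hG.
Qed.

Lemma xs_eq a : xs a = step a (Nst xs a).
Proof.
rewrite /xs Fix_eq.
  rewrite /Frec; congr (step a _); apply: spanl_ext => q /= hq.
  by rewrite /gq; case: pselect.
move=> x f g hfg; rewrite /Frec; congr (step x (Nst _ x)); apply: funext => b.
by case: pselect => // pf; apply: hfg.
Qed.

Definition Mst (a : DD) : set V := spanl (gq xs) [set q | (q.1 <= a)%O].

Lemma spanl_submod (Z : set (DD * nat)) : (forall q, Z q -> Z (q.1, q.2.+1)) ->
  submodule u (spanl (gq xs) Z).
Proof.
move=> hZ; have hS := spanl_subspace (gq xs) Z.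
split; first exact: subspace0 hS.
split; first by move=> x y; apply: subspaceD.
split; first by move=> c x; apply: subspaceZ.
move=> x [l [hl ->]]; exists (map (fun q => (q.1, (q.2.1, q.2.2.+1))) l); split.
  by move=> q /mapP[q' /hl h ->]; apply: hZ.
by rewrite linear_sum big_map; apply: eq_bigr => q _; rewrite linearZ.
Qed.

Lemma N_submod a : submodule u (Nst xs a).
Proof. exact: spanl_submod. Qed.

Lemma M_submod a : submodule u (Mst a).
Proof. exact: spanl_submod. Qed.

Lemma N_sub_M a : Nst xs a `<=` Mst a.
Proof. by apply: spanl_mono => q /= /ltW. Qed.

Lemma xs_M a : Mst a (xs a).
Proof. exact: (@spanl_gen _ _ _ (gq xs) [set q | (q.1 <= a)%O] (a, 0%N) (lexx a)). Qed.

Lemma leX_optle t t' : leXX t t' -> optle R (mxx t) (mxx t').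
Proof.
rewrite /leX /lexle => /orP[/andP[]//|/andP[/eqP -> _]].
exact: (optle_refl hR).
Qed.

Lemma leD_fst (p q : DD) : (p <= q)%O -> leXX p.1 q.1.
Proof.
rewrite leDE /leD /lexle => /orP[/andP[]//|/andP[/eqP -> _]].
exact: leX_refl.
Qed.

Lemma leaf_bound (t ta : X) k : leXX t ta -> inr k \in t ->
  exists d, mxx ta = Some d /\ R (val k) (val d).
Proof.
move=> /leX_optle hle /(mx_leaf hR) [m [hm km]].
move: hle; rewrite hm; case: (mxx ta) => [d|] //= md.
by exists d; split => //; apply: (wo_trans hR) km md.
Qed.

Definition encq (q : DD * nat) : X := inl q.2 :: inl q.1.2 :: q.1.1.

Lemma encq_inj : injective encq.
Proof. by move=> [[t1 n1] k1] [[t2 n2] k2] [-> -> ->]. Qed.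

Lemma nonbad a l : ~ (forall x, Nst xs a (u x - l *: x)).
Proof.
move=> H; have h := hTbad H.
pose S : set KK := match mxx a.1 with Some d => (fun k : KK => R (val k) (val d)) | None => set0 end.
have hS : (Tb l #<= Theta S)%card.
  apply: (card_le_trans h).
  apply: (@card_le_trans _ _ _ [set p : seq X * nat | forall w, w \in p.1 -> Theta S w]);
    last exact: card_enc.
  apply: (@mk_card_le _ _ _ _ (fun p : seq (DD * nat) * nat => (map encq p.1, p.2))).
    move=> p hp w /mapP [q qin ->] k; rewrite !in_cons /= => kin.
    have := leD_fst (ltW (hp q qin)); move=> /leaf_bound /(_ kin) [d [hd kd]].
    by rewrite /S hd.
  by move=> [p1 n1] [p2 n2] _ _ [/(inj_map encq_inj) -> ->].
rewrite /S in hS; case: (mxx a.1) hS => [d|] hS.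
  exact: (smallK (d := d) (l := l)).
exact: (small0 (l := l)).
Qed.

Lemma Nst_ne a : exists y, ~ Nst xs a y.
Proof.
apply: contrapT => H; apply: (nonbad (a := a) (l := 0)) => x.
by apply: contrapT => nx; apply: H; exists (u x - 0 *: x).
Qed.

Lemma Nst_subspace a : subspace (Nst xs a).
Proof. exact: spanl_subspace. Qed.

Lemma Nst_u a x : Nst xs a x -> Nst xs a (u x).
Proof. by case: (N_submod a) => _ [_ [_ h]]; apply: h. Qed.

Lemma ex_ne a : exists y, forall c1 c2 : F,
  Nst xs a (c1 *: y + c2 *: u y) -> c1 = 0 /\ c2 = 0.
Proof.
apply: (non_eigen (Nst_subspace a) (@Nst_u a)).
by move=> [l hl]; apply: (nonbad (a := a) (l := l)).
Qed.

Lemma xs_ne a : ~ islim a -> forall c1 c2 : F,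
  Nst xs a (c1 *: xs a + c2 *: u (xs a)) -> c1 = 0 /\ c2 = 0.
Proof.
move=> nl; rewrite xs_eq /step; destruct (pselect (islim a)) as [h|h]; first by [].
exact: (xgetPex 0 (ex_ne a)).
Qed.

Lemma xs_notin a : ~ Nst xs a (xs a).
Proof.
case: (pselect (islim a)) => hl; last first.
  move=> hN; have := @xs_ne a hl 1 0; rewrite scale1r scale0r addr0 => /(_ hN) [/eqP].
  by rewrite oner_eq0.
rewrite [X in ~ _ X]xs_eq /step; destruct (pselect (islim a)) as [h|h]; last by [].
rewrite /=; case: ifPn => [hex|_]; last exact: (xgetPex 0 (Nst_ne a)).
have ex : exists b, B b /\ iota b = a.1 /\ ~ Nst xs a b.
  by move: hex; case: pselect.
by case: (xgetPex 0 ex) => _ [].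
Qed.

Lemma mx_nil : mxx [::] = None.
Proof. by []. Qed.

Lemma ltX_nil (t : X) (k : KK) : inr k \in t -> ltX [::] t.
Proof.
move=> kt; have [m [hm _]] := mx_leaf hR kt.
rewrite /ltX /leX /lexle mx_nil hm /=.
by case: t kt {hm}.
Qed.

Lemma x_cover b : B b -> Mst ((iota b, 0%N) : DD) b.
Proof.
move=> Bb; set a : DD := (iota b, 0%N).
case: (pselect (Nst xs a b)) => hb; first exact: N_sub_M.
have [k kin] := iota_leaf Bb.
have hl : islim a by split => //; exists [::]; apply: ltX_nil kin.
have ex : exists b', B b' /\ iota b' = a.1 /\ ~ Nst xs a b' by exists b.
have e : xs a = xget 0 (fun b' => B b' /\ iota b' = a.1 /\ ~ Nst xs a b').
  rewrite [LHS]xs_eq /step; destruct (pselect (islim a)) as [h|h]; last by [].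
  by destruct (pselect (exists b, B b /\ iota b = a.1 /\ ~ Nst xs a b)).
have [Bb' [eb' _]] := xgetPex 0 ex.
have -> : b = xs a by rewrite e; apply: iota_inj => //.
exact: xs_M.
Qed.

Lemma ltD_succ (t : X) n : (((t, n) : DD) < ((t, n.+1) : DD))%O.
Proof.
rewrite lt_neqAle leDE /leD /lexle /= eqxx /= andbF /= /leN /= leqnSn andbT.
by apply/eqP => -[] /eqP; rewrite eqn_leq ltnn andbF.
Qed.

Lemma ltD_lift (t t' : X) n m : ltX t t' -> (((t, n) : DD) < ((t', m) : DD))%O.
Proof.
move=> /andP[h1 h2]; rewrite lt_neqAle leDE /leD /lexle /= h1 h2 /=.
by apply/andP; split => //; apply: contra h2 => /eqP [->].
Qed.

Lemma ltD_0 (p : DD) (t : X) : (p < ((t, 0%N) : DD))%O -> ltX p.1 t.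
Proof.
rewrite lt_neqAle leDE /leD /lexle /= => /andP[ne /orP[//|/andP[/eqP e]]].
rewrite /leN /= leqn0 => /eqP e2; move: ne; case: p e e2 => /= t1 n1 -> ->.
by rewrite eqxx.
Qed.

Lemma below_eq a : below Mst a = Nst xs a.
Proof.
apply/seteqP; split => x.
  move=> [s [f [hs ->]]]; apply: subspace_sum; first exact: Nst_subspace.
  move=> b bs; have [ba Mb] := hs b bs.
  by apply: (spanl_mono _ Mb) => q /= qb; apply: le_lt_trans qb ba.
move=> [l [hl ->]].
exists (undup (map (fun q => q.2.1) l)).
exists (fun b => \sum_(q <- l | q.2.1 == b) q.1 *: gq xs q.2); split.
  move=> b; rewrite mem_undup => /mapP [q ql ->]; split; first exact: hl.
  apply: subspace_sumP; first exact: spanl_subspace.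
  move=> q' /eqP <-; apply: subspaceZ; first exact: spanl_subspace.
  by apply: spanl_gen => /=.
exact: sum_partition.
Qed.

Lemma sumfam_all : sumfam Mst (fun _ => True) = setT.
Proof.
apply/seteqP; split => // x _.
have : Defs.span B x by case: hB => _ [_ ->].
rewrite span_spanl => -[l [hl ->]].
exists (undup (map (fun p => ((iota p.2, 0%N) : DD)) l)).
exists (fun d => \sum_(p <- l | ((iota p.2, 0%N) : DD) == d) p.1 *: p.2); split.
  move=> d; rewrite mem_undup => /mapP [p pl ->]; split => //.
  rewrite big_seq_cond; apply: subspace_sumP; first exact: spanl_subspace.
  move=> p' /andP[p'l /eqP <-]; apply: subspaceZ; first exact: spanl_subspace.
  exact: x_cover (hl p' p'l).
exact: (sum_partition l (fun p => ((iota p.2, 0%N) : DD)) (fun p => p.1 *: p.2)).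
Qed.

Lemma cyclic a : forall y, Mst a y ->
  exists (p : {poly F}) n, below Mst a n /\ y = n + peval u p (xs a).
Proof.
move=> y [l [hl ->]]; rewrite below_eq.
exists (\sum_(q <- l | ~~ (q.2.1 < a)%O) q.1 *: 'X^(q.2.2)).
exists (\sum_(q <- l | (q.2.1 < a)%O) q.1 *: gq xs q.2); split.
  apply: subspace_sumP; first exact: Nst_subspace.
  move=> q qa; apply: subspaceZ; first exact: Nst_subspace.
  exact: spanl_gen.
rewrite peval_sum (bigID (fun q => (q.2.1 < a)%O)) /=; congr (_ + _).
rewrite big_seq_cond [RHS]big_seq_cond; apply: eq_bigr => q /andP[ql qa].
have := hl q ql; rewrite /= le_eqVlt (negbTE qa) orbF => /eqP e.
by rewrite /gq e.
Qed.

Lemma good_strat : has_good_stratification u.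
Proof.
exists wo_display, DD, Mst; split; first exact: D_well_ordered.
split.
  split.
  - exact: M_submod.
  - by move=> a b ab; apply: spanl_mono => q /= qa; apply: le_trans qa ab.
  - move=> a; exists (xs a); split; first exact: xs_M.
    by rewrite below_eq; apply: xs_notin.
  - move=> a; exists (xs a); split; first exact: xs_M.
    exact: cyclic.
  - exact: sumfam_all.
split; last first.
  by move=> [t n]; exists ((t, n.+1) : DD); apply: ltD_succ.
move=> a hmin; exists (xs a), (u (xs a)); split; first exact: xs_M.
split; first by case: (M_submod a) => _ [_ [_ h]]; apply: h; apply: xs_M.
move=> c1 c2; rewrite below_eq; apply: xs_ne.
case: a hmin => ta na hmin [/= a2 [t ht]]; rewrite a2 in hmin.
case: hmin => [hm|[b [ba nb]]].
  have := hm ((t, 0%N) : DD); rewrite leNgt => /negP; apply.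
  exact: ltD_lift.
have hb := ltD_0 ba; apply: nb; exists ((b.1, b.2.+1) : DD); split.
  by case: b ba hb => t1 n1 /= _ _; apply: ltD_succ.
exact: ltD_lift.
Qed.

End Main.

Section Final.
Local Open Scope classical_set_scope.
Local Open Scope ring_scope.

Lemma range_subspace (F : fieldType) (V : lmodType F) (u : {linear V -> V}) (l : F) :
  subspace (range (fun x => u x - l *: x)).
Proof.
split; first by exists 0 => //=; rewrite linear0 scaler0 subr0.
split.
  move=> _ _ [x _ <-] [y _ <-]; exists (x + y) => //.
  by rewrite linearD scalerDr opprD addrACA.
move=> a _ [x _ <-]; exists (a *: x) => //.
by rewrite linearZ scalerBr !scalerA mulrC.
Qed.

Lemma map_inj_set (T U : eqType) (A : set T) (f : T -> U) (s1 s2 : seq T) :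
  (forall x y, A x -> A y -> f x = f y -> x = y) ->
  (forall x, x \in s1 -> A x) -> (forall x, x \in s2 -> A x) ->
  map f s1 = map f s2 -> s1 = s2.
Proof.
move=> hf; elim: s1 s2 => [|x1 s1 IH] [|x2 s2] //= h1 h2 [e1 e2].
rewrite (hf x1 x2 (h1 _ (mem_head _ _)) (h2 _ (mem_head _ _)) e1).
congr (_ :: _); apply: IH => // x xs; [apply: h1|apply: h2]; by rewrite in_cons xs orbT.
Qed.

End Final.

Local Open Scope classical_set_scope.
Local Open Scope ring_scope.

Theorem proposition4 (F : fieldType) (V : lmodType F) (u : {linear V -> V}) :
  uncountable_dim V ->
  (forall l : F, ~ dominant_eigenvalue u l) ->
  has_good_stratification u.
Proof.
move=> [B [hB hBc]] hnd.
have hT : forall l : F, exists T : set V, Defs.basis_of setT T /\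
    exists C : set V, lin_indep C /\ C `<=` range (fun x => u x - l *: x) /\ (T #<= C)%card.
  move=> l.
  have hI0 : lin_indep (@set0 V) by move=> s c _ hs _ v /hs.
  have [C [hCb _]] := basis_ext (range_subspace u l) (sub0set _) hI0.
  have hCb' := hCb; case: hCb' => CR [hC _].
  have hsT : subspace (@setT V) by split => //.
  have [T [hTb CT]] := basis_ext hsT (fun _ _ => I) hC.
  exists T; split => //; exists C; split => //; split => //.
  apply: contrapT => nTC; apply: (hnd l); exists C, T; split => //; split => //; split => //.
  exact: subset_card_le CT.
have [Tb hTb] := choice hT.
have hTbad : forall (Y : eqType) (g : Y -> V) (Z : set Y) (l : F),
    (forall x, spanl g Z (u x - l *: x)) ->
    (Tb l #<= [set p : seq Y * nat | forall y, y \in p.1 -> Z y])%card.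
  move=> Y g Z l H; have [_ [C [hC [CR TC]]]] := hTb l.
  apply: (card_le_trans TC); apply: fin_arg => // c /CR [x _ <-]; exact: H.
have [R hR] := well_ordering_principle V.
case: hB => _ [hBi hBs].
have hBT : forall l, (B #<= [set p : seq V * nat | forall y, y \in p.1 -> Tb l y])%card.
  move=> l; apply: (@fin_arg F V V id (Tb l) B hBi) => x _; rewrite -span_spanl.
  by have [[_ [_ ->]] _] := hTb l.
pose bigV v := exists l, (Tb l #<= Theta [set w | R w v && (w != v)])%card.
have [P [P1 P2]] : exists P : pred V,
    (forall v, P v -> forall l, ~ (Tb l #<= Theta [set w | R w v && (w != v)])%card) /\
    (B #<= Theta (fun v => P v))%card.
  case: (pselect (exists v, bigV v)) => [exb|nexb]; last first.
    exists predT; split; first by move=> v _ l h; apply: nexb; exists v, l.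
    apply: (@mk_card_le _ _ _ _ (fun v => [:: inr v])) => //.
    by move=> x y _ _ [->].
  have [a0 [[l0 hl0] lb]] := wo_min hR exb.
  exists (fun v => R v a0 && (v != a0)); split.
    move=> v /andP[va0 vn] l h; have a0v := lb v (ex_intro _ l h).
    by move: vn; rewrite (@wo_anti _ _ hR v a0) ?va0 ?a0v ?eqxx.
  apply: (card_le_trans (hBT l0)).
  have [f [hf1 hf2]] := card_le_fun [::] hl0.
  apply: (card_le_trans _ (card_enc _)).
  apply: (@mk_card_le _ _ _ _ (fun p : seq V * nat => (map f p.1, p.2))).
    by move=> p hp w /mapP [v vin ->]; apply: hf1; apply: hp.
  move=> [s1 n1] [s2 n2] h1 h2 [e1 ->]; congr (_, _).
  exact: (map_inj_set hf2 h1 h2 e1).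
have [k0v Pk0] : exists v, P v.
  apply: contrapT => nP; apply: hBc.
  apply: (card_le_trans P2); apply: (card_le_trans _ (Theta0_countable _)).
  by apply: subset_card_le; apply: Theta_sub => v Pv; apply: nP; exists v.
have [f [hf1 hf2]] := card_le_fun [::] P2.
pose k0 : K P := exist _ k0v Pk0.
pose iota := fun b => inr k0 :: lowK P (f b).
have hB : Defs.basis_of setT B by split => //.
apply: (@good_strat F V u B hB Tb hTbad R hR P P1 k0 iota).
  move=> b b' Bb Bb' [e]; apply: hf2 => //.
  exact: lowK_inj (hf1 _ Bb) (hf1 _ Bb') e.
by move=> b _; exists k0; rewrite mem_head.
Qed.
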